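(* Let $n,m$ be positive integers and $\pi\in S_n$. Then $x_m(\pi)=\dfrac{\Omega_\pi(m)}{(2m+1)^n}$, $x^*_m(\pi)=\dfrac{\Omega^*_\pi(m)}{(2m)^n}$, $x^+_m(\pi)=\dfrac{\Omega^+_\pi(m)}{m^n}$, and moreover $y_m(\pi)=x_m(\pi^{-1})$, $y^*_m(\pi)=x^*_m(\pi^{-1})$, $y^+_m(\pi)=x^+_m(\pi^{-1})$.
   Context: Integers are written with $\bar i=-i$, ordered $0<_{\mathbb Z}\bar1<_{\mathbb Z}1<_{\mathbb Z}\bar2<_{\mathbb Z}2<_{\mathbb Z}\cdots$, $|\bar j|=j$. Write $a\prec_+ b$ if $a<_{\mathbb Z}b$ or $a=b\in\{0,1,2,\ldots\}$, and $a\prec_- b$ if $a<_{\mathbb Z}b$ or $a=b\in\{\bar1,\bar2,\ldots\}$. For $\pi\in S_n$, a $\pi$-partition is $f:[n]\to\mathbb Z$ with, for each $1\le i<n$, $f(\pi(i))\prec_+ f(\pi(i+1))$ if $\pi(i)<\pi(i+1)$ and $f(\pi(i))\prec_- f(\pi(i+1))$ if $\pi(i)>\pi(i+1)$. $\Omega_\pi(m)$ counts $\pi$-partitions with $|f(i)|\le m$; $\Omega^*_\pi(m)$ counts those also never equal to $0$; $\Omega^+_\pi(m)$ counts those with values in $\{1,\ldots,m\}$. Shelf shufflers: a deck of cards labeled $1,\ldots,n$ top to bottom; cards are taken in order $1,\ldots,n$, each independently placed. Lazy mode: each card chooses uniformly among $2m+1$ options: shelf $0$ (placed below the cards already there), or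 shelf $j\in\{1,\ldots,m\}$ on top of, or below, the cards already there. Standard mode: same without shelf $0$ ($2m$ options). Strict mode: uniformly one of shelves $1,\ldots,m$, always placed below the cards already there. Finally piles are stacked with shelf $0$ (if present) on top, then shelf $1$, ..., shelf $m$; the result is the permutation $\pi$ with $\pi(i)$ the card in position $i$ from the top. $x_m(\pi),x^*_m(\pi),x^+_m(\pi)$ are the probabilities of obtaining $\pi$ in lazy, standard, strict mode. Riffle shuffles: for a weak composition $A$ of $n$ into $r$ parts, chosen with multinomial probability $\binom{n}{A}/r^n$, cut the deck $1,\ldots,n$ into consecutive piles of these sizes, then interleave the piles, each of the $\binom nA$ interleavings (keeping each pile's internal order) being equally likely; $\pi(i)$ is the card in position $i$. Classic $m$-riffle: $r=m$, no piles reversed. Down-up $m$-riffle: $r=2m$, piles $1,3,5,\ldots$ reversed. Up-down $m$-riffle: $r=2m+1$, piles $2,4,6,\ldots$ reversed. $y^+_m(\pi)$, $y^*_m(\pi)$, $y_m(\pi)$ denote the probabilities of obtaining $\pi$ from a classic, down-up, up-down $m$-riffle shuffle respectively. *)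

(* Defs.v *)
(* Cards and positions are 0-indexed: card labels 1..n of the
   paper are 0..n-1 here, positions likewise. *)
From mathcomp Require Import all_boot all_order all_algebra all_fingroup.
Set Implicit Arguments. Unset Strict Implicit. Unset Printing Implicit Defensive.
Import Order.TTheory GRing.Theory Num.Theory.

Local Open Scope ring_scope.

(* rank of an integer in the order 0, -1, 1, -2, 2, ... *)
Definition zkey (a : int) : nat := (2 * `|a|)%N - (a < 0)%R.

Definition zlt (a b : int) : bool := (zkey a < zkey b)%N.

Definition precp (a b : int) : bool := zlt a b || ((a == b) && (0 <= a)).
Definition precm (a b : int) : bool := zlt a b || ((a == b) && (a < 0)).

Definition is_pi_partition n (pi : 'S_n) (f : 'I_n -> int) : bool :=
  [forall i : 'I_n, forall j : 'I_n, (val j == (val i).+1)%N ==>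
     (if (val (pi i) < val (pi j))%N then precp (f (pi i)) (f (pi j))
      else precm (f (pi i)) (f (pi j)))].

(* value k : 'I_(2m+1) encodes the integer k - m, so the range is [-m, m] *)
Definition zdec m (k : 'I_(2 * m + 1)) : int := (val k)%:Z - m%:Z.

Definition Omega n m (pi : 'S_n) : nat :=
  #|[set g : {ffun 'I_n -> 'I_(2 * m + 1)} |
      is_pi_partition pi (fun i => zdec (g i))]|.

Definition Omega_star n m (pi : 'S_n) : nat :=
  #|[set g : {ffun 'I_n -> 'I_(2 * m + 1)} |
      is_pi_partition pi (fun i => zdec (g i)) &&
      [forall i, zdec (g i) != 0]]|.

Definition Omega_plus n m (pi : 'S_n) : nat :=
  #|[set g : {ffun 'I_n -> 'I_(2 * m + 1)} |
      is_pi_partition pi (fun i => zdec (g i)) &&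
      [forall i, 1 <= zdec (g i)]]|.

Local Close Scope ring_scope.

(* the permutation as the deck (seq of cards, top to bottom): position i holds pi i *)
Definition perm_seq n (pi : 'S_n) : seq 'I_n := [seq pi i | i <- enum 'I_n].

(* choice c : card -> (shelf, placed_on_top).  Cards are processed in order
   0,...,n-1; each shelf pile is a seq, top first. *)
Definition shelf_pile n (choice : 'I_n -> nat * bool) (k : nat) : seq 'I_n :=
  foldl (fun p c => if (choice c).1 == k then
                      (if (choice c).2 then c :: p else rcons p c)
                    else p) [::] (enum 'I_n).

Definition shelf_deck n m (choice : 'I_n -> nat * bool) : seq 'I_n :=
  flatten [seq shelf_pile choice k | k <- iota 0 m.+1].

(* lazy mode: 2m+1 options: 0 -> shelf 0 (below);
   2j-1 -> shelf j on top; 2j -> shelf j below (j = 1..m) *)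
Definition lazy_opt m (k : 'I_(2 * m + 1)) : nat * bool :=
  if val k == 0 then (0, false) else (((val k).+1)./2, odd (val k)).

(* standard mode: 2m options: 2(j-1) -> shelf j on top, 2(j-1)+1 -> shelf j below *)
Definition std_opt m (k : 'I_(2 * m)) : nat * bool :=
  (((val k)./2).+1, ~~ odd (val k)).

Definition strict_opt m (k : 'I_m) : nat * bool := ((val k).+1, false).

Local Open Scope ring_scope.

(* probabilities: each card independently uniform among the options, i.e.
   every choice function has probability 1/(#options)^n *)
Definition x_lazy n m (pi : 'S_n) : rat :=
  (#|[set c : {ffun 'I_n -> 'I_(2 * m + 1)} |
       shelf_deck m (fun i => lazy_opt (c i)) == perm_seq pi]|)%:R
  / ((2 * m + 1) ^ n)%N%:R.

Definition x_std n m (pi : 'S_n) : rat :=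
  (#|[set c : {ffun 'I_n -> 'I_(2 * m)} |
       shelf_deck m (fun i => std_opt (c i)) == perm_seq pi]|)%:R
  / ((2 * m) ^ n)%N%:R.

Definition x_strict n m (pi : 'S_n) : rat :=
  (#|[set c : {ffun 'I_n -> 'I_m} |
       shelf_deck m (fun i => strict_opt (c i)) == perm_seq pi]|)%:R
  / (m ^ n)%N%:R.

(* weak compositions of n into r parts: A : 'I_r -> 'I_n.+1 with sum n *)
Definition multinom n r (A : {ffun 'I_r -> 'I_n.+1}) : rat :=
  (n`!)%:R / (\prod_(k < r) ((A k)`!)%:R).

(* pile l (0-indexed) of the cut: cards s, s+1, ..., s + A l - 1 with
   s = A_0 + ... + A_(l-1), top to bottom; reversed if rv l *)
Definition riffle_pile n r (A : {ffun 'I_r -> 'I_n.+1}) (rv : nat -> bool)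
    (l : 'I_r) : seq nat :=
  let p := iota (\sum_(j < r | (val j < val l)%N) val (A j))%N (A l) in
  if rv (val l) then rev p else p.

(* an interleaving is a word w : positions -> pile labels, with A l
   occurrences of label l; position i receives the next (topmost remaining)
   card of pile (w i) *)
Definition riffle_deck n r (A : {ffun 'I_r -> 'I_n.+1}) (rv : nat -> bool)
    (w : {ffun 'I_n -> 'I_r}) : seq nat :=
  [seq nth 0%N (riffle_pile A rv (w i))
         #|[set j : 'I_n | (val j < val i)%N && (w j == w i)]|
  | i <- enum 'I_n].

Definition is_interleaving n r (A : {ffun 'I_r -> 'I_n.+1})
    (w : {ffun 'I_n -> 'I_r}) : bool :=
  [forall l : 'I_r, #|[set i : 'I_n | w i == l]| == val (A l)].

(* probability of obtaining pi: sum over weak compositions A of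
   P(A) = multinom(A)/r^n times the probability that a uniformly random
   interleaving (out of multinom(A) of them) yields pi *)
Definition riffle_prob n r (rv : nat -> bool) (pi : 'S_n) : rat :=
  \sum_(A : {ffun 'I_r -> 'I_n.+1} | (\sum_(k < r) val (A k))%N == n)
     (multinom A / (r ^ n)%N%:R) *
     ((#|[set w : {ffun 'I_n -> 'I_r} |
          is_interleaving A w && (riffle_deck A rv w == map val (perm_seq pi))]|)%:R
      / multinom A).

(* classic m-riffle: m piles, none reversed *)
Definition y_plus n m (pi : 'S_n) : rat := riffle_prob m (fun _ => false) pi.
(* down-up m-riffle: 2m piles, piles 1,3,5,... (1-indexed) i.e. 0,2,4,... (0-indexed) reversed *)
Definition y_star n m (pi : 'S_n) : rat := riffle_prob (2 * m) (fun k => ~~ odd k) pi.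
(* up-down m-riffle: 2m+1 piles, piles 2,4,6,... (1-indexed) i.e. 1,3,5,... (0-indexed) reversed *)
Definition y_lazy n m (pi : 'S_n) : rat := riffle_prob (2 * m + 1) (fun k => odd k) pi.

(* Main.v *)
Require Import Defs.
From mathcomp Require Import all_boot all_order all_algebra all_fingroup.
From mathcomp Require Import zify.
Set Implicit Arguments. Unset Strict Implicit. Unset Printing Implicit Defensive.
Import GRing.Theory Num.Theory.

Definition ltl n (lam : 'I_n -> nat) (rv : nat -> bool) : rel 'I_n :=
  fun a b => (lam a < lam b) || ((lam a == lam b) &&
     (if rv (lam a) then (b < a) else (a < b))).

Lemma ltl_irr n lam rv : irreflexive (@ltl n lam rv).
Proof. by move=> a; rewrite /ltl ltnn eqxx /=; case: (rv _); rewrite ltnn. Qed.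

Lemma ltl_trans n lam rv : transitive (@ltl n lam rv).
Proof.
move=> b a c; rewrite /ltl.
move=> /orP[h1|/andP[/eqP e1 h1]] /orP[h2|/andP[/eqP e2 h2]].
- by rewrite (ltn_trans h1 h2).
- by rewrite -e2 h1.
- by rewrite e1 h2.
- apply/orP; right; rewrite -e2 -e1 eqxx /=; rewrite -e1 in h2.
  case: (rv _) h1 h2 => h1 h2; lia.
Qed.

Lemma ltl_total n lam rv (a b : 'I_n) : a != b -> ltl lam rv a b || ltl lam rv b a.
Proof.
move=> ab; rewrite /ltl; case: (ltngtP (lam a) (lam b)) => //= e.
rewrite ?e ?eqxx /=; case: (rv _); move: ab; rewrite -val_eqE /=; lia.
Qed.

Lemma sorted_rank n (x0 : 'I_n) (r : rel 'I_n) (s : seq 'I_n) :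
  irreflexive r -> transitive r -> (forall a b, a != b -> r a b || r b a) ->
  uniq s -> (forall x, x \in s) ->
  sorted r s <-> (forall x, index x s = #|[set y | r y x]|).
Proof.
move=> irr tr tot us alls; split.
- rewrite sorted_pairwise // => /(pairwiseP x0) pw x.
  have key : forall y, r y x = (index y s < index x s).
    move=> y; case: (ltngtP (index y s) (index x s)) => h.
    + have := pw (index y s) (index x s); rewrite !nth_index //; apply;
        rewrite //= inE index_mem //.
    + apply/negP => ryx.
      have rxy : r x y.
        have := pw (index x s) (index y s); rewrite !nth_index //; apply;
          rewrite //= inE index_mem //.
      by move: (irr x); rewrite (tr _ _ _ rxy ryx).
    + have -> : y = x by rewrite -(nth_index x (alls y)) h nth_index.
      by rewrite irr.
  have -> : [set y | r y x] = [set y in take (index x s) s].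
    by apply/setP => y; rewrite !inE key in_take.
  rewrite cardsE; move/card_uniqP: (take_uniq (index x s) us) => ->.
  by rewrite size_take index_mem alls.
- move=> hr; apply/(sortedP x0) => i hi.
  set a := nth x0 s i; set b := nth x0 s i.+1.
  have ia : index a s = i by rewrite index_uniq // ltnW.
  have ib : index b s = i.+1 by rewrite index_uniq.
  have ab : a != b by apply/eqP => e; move: ia; rewrite e ib; lia.
  case/orP: (tot a b ab) => // rba.
  have : (#|b |: [set y | r y b]| <= #|[set y | r y a]|).
    apply: subset_leq_card; apply/subsetP => y; rewrite !inE.
    by case/orP=> [/eqP ->|h] //; apply: tr h rba.
  rewrite cardsU1 !inE irr -hr -hr ia ib; lia.
Qed.

Definition skey (p : nat * bool) := if p.2 then 2 * p.1 - 1 else 2 * p.1.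

Lemma shelf_foldl n (ch : 'I_n -> nat * bool) k (s : seq 'I_n) p :
  foldl (fun p c => if (ch c).1 == k then
                      (if (ch c).2 then c :: p else rcons p c)
                    else p) p s =
  rev [seq c <- s | ((ch c).1 == k) && (ch c).2] ++ p ++
      [seq c <- s | ((ch c).1 == k) && ~~ (ch c).2].
Proof.
elim: s p => [|x s IH] p /=; first by rewrite cats0.
rewrite IH; case: eqP => _ /=; last by [].
case: (ch x).2 => /=.
- by rewrite rev_cons cat_rcons.
- by rewrite -cats1 -!catA.
Qed.

Lemma shelf_pileE n (ch : 'I_n -> nat * bool) k :
  shelf_pile ch k = rev [seq c <- enum 'I_n | ((ch c).1 == k) && (ch c).2] ++
      [seq c <- enum 'I_n | ((ch c).1 == k) && ~~ (ch c).2].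
Proof. by rewrite /shelf_pile shelf_foldl. Qed.

Lemma pairwise_flatten_iota (T : Type) (r : rel T) (P : nat -> seq T) a k :
  (forall l, pairwise r (P l)) ->
  (forall l l', l < l' -> allrel r (P l) (P l')) ->
  pairwise r (flatten [seq P l | l <- iota a k]).
Proof.
move=> h1 h2; elim: k a => [|k IH] a //=.
rewrite pairwise_cat h1 IH /= !andbT.
suff H : forall b, a < b -> allrel r (P a) (flatten [seq P l | l <- iota b k]).
  by apply: H.
elim: k {IH} => [|k IH] b ab /=; first by rewrite allrel0r.
by rewrite allrel_catr h2 //= IH // ltnW.
Qed.

Lemma pairwise_rev (T : Type) (r : rel T) s :
  pairwise r (rev s) = pairwise (fun x y => r y x) s.
Proof.
elim: s => //= x s IH.
rewrite rev_cons -cats1 pairwise_cat IH /= andbT; congr (_ && _).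
by rewrite allrel1r all_rev.
Qed.

Lemma pairwise_enum_filter n (p : pred 'I_n) (r : rel 'I_n) :
  {in p &, forall x y : 'I_n, x < y -> r x y} -> pairwise r (filter p (enum 'I_n)).
Proof.
move=> H; apply: (@sub_in_pairwise _ p (relpre val ltn)).
- by move=> x y px py; exact: H.
- exact: filter_all.
- apply: pairwise_filter; rewrite -(pairwise_map val ltn) val_enum_ord.
  by rewrite -sorted_pairwise; [exact: iota_ltn_sorted | exact: ltn_trans].
Qed.

Lemma shelf_sorted n m (ch : 'I_n -> nat * bool) :
  (forall c, (ch c).2 -> 0 < (ch c).1) ->
  sorted (ltl (fun c => skey (ch c)) odd) (shelf_deck m ch).
Proof.
move=> h0; rewrite sorted_pairwise; last exact: ltl_trans.
apply: pairwise_flatten_iota.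
- move=> l; rewrite shelf_pileE pairwise_cat; apply/and3P; split.
  + apply/allrelP => x y; rewrite mem_rev !mem_filter.
    move=> /andP[/andP[/eqP ex tx] _] /andP[/andP[/eqP ey ty] _].
    have := h0 x tx; rewrite /ltl /skey tx (negbTE ty) ex ey => l0.
    apply/orP; left; lia.
  + rewrite pairwise_rev; apply: pairwise_enum_filter => x y.
    rewrite !unfold_in => /andP[/eqP ex tx] /andP[/eqP ey ty] xy.
    have := h0 x tx; rewrite /ltl /skey tx ty ex ey eqxx ltnn /= => l0.
    have -> : odd (2 * l - 1) by clear -l0; case: l l0 => // l _; rewrite mulnS subn1 /= oddM.
    by [].
  + apply: pairwise_enum_filter => x y.
    rewrite !unfold_in => /andP[/eqP ex tx] /andP[/eqP ey ty] xy.
    rewrite /ltl /skey (negbTE tx) (negbTE ty) ex ey eqxx ltnn /=.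
    by rewrite oddM.
- move=> l l' ll'; apply/allrelP => x y; rewrite !shelf_pileE !mem_cat !mem_rev !mem_filter.
  move=> /orP[/andP[/andP[/eqP ex _] _]|/andP[/andP[/eqP ex _] _]];
  move=> /orP[/andP[/andP[/eqP ey _] _]|/andP[/andP[/eqP ey _] _]];
  rewrite /ltl /skey ex ey; apply/orP; left; case: (ch x).2; case: (ch y).2; lia.
Qed.

Lemma shelf_mem n m (ch : 'I_n -> nat * bool) :
  (forall c, (ch c).1 <= m) -> forall x, x \in shelf_deck m ch.
Proof.
move=> hm x; apply/flatten_mapP; exists (ch x).1.
- by rewrite mem_iota /= add0n ltnS hm.
- rewrite shelf_pileE mem_cat mem_rev !mem_filter eqxx -enumT mem_enum /=.
  by case: (ch x).2.
Qed.

Lemma perm_seq_mem n (pi : 'S_n) x : x \in perm_seq pi.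
Proof. by apply/mapP; exists (pi^-1 x)%g; rewrite ?mem_enum ?permKV. Qed.

Lemma shelf_eq n m (ch : 'I_n -> nat * bool) (pi : 'S_n) :
  (forall c, (ch c).1 <= m) -> (forall c, (ch c).2 -> 0 < (ch c).1) ->
  (shelf_deck m ch == perm_seq pi) = sorted (ltl (fun c => skey (ch c)) odd) (perm_seq pi).
Proof.
move=> hm h0; apply/eqP/idP => [<-|h]; first exact: shelf_sorted.
apply: (irr_sorted_eq (@ltl_trans _ _ _) (@ltl_irr _ _ _)).
- exact: shelf_sorted.
- exact: h.
- by move=> x; rewrite shelf_mem // perm_seq_mem.
Qed.

Definition Kz m (k : nat) := if m <= k then 2 * (k - m) else 2 * (m - k) - 1.

Lemma zkey_zdec m (k : 'I_(2 * m + 1)) : zkey (zdec k) = Kz m k.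
Proof.
rewrite /zkey /zdec /Kz; case: leqP => h.
- rewrite subzn //= subn0; done.
- by rewrite -opprB subzn ?(ltnW h) // abszN oppr_lt0 ltz_nat /= subn_gt0 h.
Qed.

Lemma Kz_inj m (u v : 'I_(2 * m + 1)) : (Kz m u == Kz m v) = (u == v).
Proof.
rewrite /Kz; apply/eqP/eqP => [h|->] //; apply: ord_inj; move: h.
by case: (leqP m u); case: (leqP m v); lia.
Qed.

Lemma Kz_odd m (u : nat) : odd (Kz m u) = (u < m).
Proof.
rewrite /Kz; case: leqP => h; first by rewrite oddM.
have -> : 2 * (m - u) - 1 = (2 * (m - u - 1)).+1 by lia.
by rewrite /= oddM.
Qed.

Lemma zdec_eq m (u v : 'I_(2 * m + 1)) : (zdec u == zdec v) = (u == v).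
Proof.
rewrite /zdec; apply/eqP/eqP => [|->] //.
move/(congr1 (fun x => x + m%:Z)%R); rewrite !subrK => /eqP; rewrite eqz_nat => /eqP; apply: ord_inj.
Qed.

Lemma zdec_ge0 m (u : 'I_(2 * m + 1)) : (0 <= zdec u)%R = (m <= u).
Proof. by rewrite /zdec subr_ge0 lez_nat. Qed.

Lemma zdec_lt0 m (u : 'I_(2 * m + 1)) : (zdec u < 0)%R = (u < m).
Proof. by rewrite /zdec subr_lt0 ltz_nat. Qed.

Lemma pp_pair n m (g : 'I_n -> 'I_(2 * m + 1)) (a b : 'I_n) : a != b ->
  (if a < b then precp (zdec (g a)) (zdec (g b)) else precm (zdec (g a)) (zdec (g b)))
  = ltl (fun i => Kz m (g i)) odd a b.
Proof.
move=> ab; rewrite /precp /precm /zlt /ltl !zkey_zdec Kz_inj Kz_odd zdec_eq zdec_ge0 zdec_lt0.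
have ab' : (a : nat) != b by rewrite val_eqE.
case: ltngtP ab' => // h _; case: (leqP m (g a)) => hm /=; rewrite ?andbF ?andbT //.
Qed.

Lemma nth_perm_seq n (pi : 'S_n) x0 (i : 'I_n) : nth x0 (perm_seq pi) i = pi i.
Proof.
rewrite /perm_seq (nth_map x0) ?size_enum_ord //; congr (pi _).
by apply: ord_inj; rewrite nth_enum_ord.
Qed.

Lemma size_perm_seq n (pi : 'S_n) : size (perm_seq pi) = n.
Proof. by rewrite size_map size_enum_ord. Qed.

Lemma pp_sorted n m (pi : 'S_n) (g : 'I_n -> 'I_(2 * m + 1)) (x0 : 'I_n) :
  is_pi_partition pi (fun i => zdec (g i)) =
  sorted (ltl (fun i => Kz m (g i)) odd) (perm_seq pi).
Proof.
rewrite /is_pi_partition; apply/forallP/(sortedP x0) => [H k hk | H i].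
- rewrite size_perm_seq in hk.
  have hk' : k < n by apply: ltnW.
  have := forallP (H (Ordinal hk')) (Ordinal hk); rewrite eqxx /=.
  rewrite pp_pair; last by rewrite (inj_eq perm_inj) -val_eqE /= neq_ltn ltnSn.
  have e1 := nth_perm_seq pi x0 (Ordinal hk'); have e2 := nth_perm_seq pi x0 (Ordinal hk).
  by simpl in e1, e2; rewrite e1 e2.
- apply/forallP => j; apply/implyP => /eqP hj.
  rewrite pp_pair; last by rewrite (inj_eq perm_inj) -val_eqE /= hj neq_ltn ltnSn.
  have := H i; rewrite size_perm_seq -hj ltn_ord => /(_ isT).
  by rewrite (nth_perm_seq pi x0 i) -[\val j]/(nat_of_ord j) nth_perm_seq.
Qed.

Lemma card_transfer n N N' (k1 : 'I_N -> nat) (k2 : 'I_N' -> nat) (cond : pred 'I_N')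
  (S : ('I_n -> nat) -> bool)
  (Sext : forall l1 l2, l1 =1 l2 -> S l1 = S l2)
  (h : 'I_N -> 'I_N') (h' : 'I_N' -> 'I_N)
  (hh : forall t, k2 (h t) = k1 t) (hc : forall t, cond (h t))
  (hh' : forall t, cond t -> k1 (h' t) = k2 t)
  (k1inj : injective k1) (k2inj : {in cond &, injective k2}) :
  #|[set c : {ffun 'I_n -> 'I_N} | S (fun i => k1 (c i))]| =
  #|[set g : {ffun 'I_n -> 'I_N'} | S (fun i => k2 (g i)) && [forall i, cond (g i)]]|.
Proof.
apply/eqP; rewrite eqn_leq; apply/andP; split.
- rewrite -(@card_in_imset _ _ (fun c : {ffun 'I_n -> 'I_N} => [ffun i => h (c i)])).
    apply: subset_leq_card; apply/subsetP => g /imsetP [c]; rewrite inE => Sc ->.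
    rewrite inE; apply/andP; split.
      by rewrite (Sext _ (fun i => k1 (c i))) // => i; rewrite ffunE hh.
    by apply/forallP => i; rewrite ffunE hc.
  move=> c1 c2 _ _ e; apply/ffunP => i.
  by have := congr1 (fun f : {ffun 'I_n -> 'I_N'} => f i) e; rewrite !ffunE => /(congr1 k2); rewrite !hh => /k1inj.
- rewrite -(@card_in_imset _ _ (fun g : {ffun 'I_n -> 'I_N'} => [ffun i => h' (g i)])).
    apply: subset_leq_card; apply/subsetP => c /imsetP [g]; rewrite inE => /andP[Sg /forallP cg] ->.
    rewrite inE (Sext _ (fun i => k2 (g i))) // => i; rewrite ffunE hh' //.
  move=> g1 g2; rewrite !inE => /andP[_ /forallP c1] /andP[_ /forallP c2] e; apply/ffunP => i.
  have := congr1 (fun f : {ffun 'I_n -> 'I_N} => f i) e; rewrite !ffunE => /(congr1 k1); rewrite !hh' // => /k2inj.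
  by apply; rewrite unfold_in ?c1 ?c2.
Qed.

Lemma ltl_ext n (l1 l2 : 'I_n -> nat) rv : l1 =1 l2 -> ltl l1 rv =2 ltl l2 rv.
Proof. by move=> E a b; rewrite /ltl !E. Qed.

Lemma sorted_ltl_ext n (l1 l2 : 'I_n -> nat) rv s : l1 =1 l2 ->
  sorted (ltl l1 rv) s = sorted (ltl l2 rv) s.
Proof.
move=> E; rewrite !sorted_pairwise; try exact: ltl_trans.
by apply: eq_pairwise; apply: ltl_ext.
Qed.

Lemma skey_lazy m (k : 'I_(2 * m + 1)) : skey (lazy_opt k) = k.
Proof.
rewrite /skey /lazy_opt; case: eqP => [e|h] /=; first by have e' : nat_of_ord k = 0 := e; rewrite /skey /=.
have := odd_double_half k; rewrite ?uphalfE; case: (odd k) => /= e; lia.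
Qed.

Lemma lazy_bounds m (k : 'I_(2 * m + 1)) :
  ((lazy_opt k).1 <= m) /\ ((lazy_opt k).2 -> 0 < (lazy_opt k).1).
Proof.
rewrite /lazy_opt; case: eqP => [e|h] /=; first by have e' : nat_of_ord k = 0 := e; rewrite /skey /=.
have := ltn_ord k; have := odd_double_half k; rewrite ?uphalfE; case: (odd k) => /= e; lia.
Qed.

Lemma skey_std m (k : 'I_(2 * m)) : skey (std_opt k) = k.+1.
Proof.
rewrite /skey /std_opt /=.
have := odd_double_half k; rewrite ?uphalfE; case: (odd k) => /= e; lia.
Qed.

Lemma std_bounds m (k : 'I_(2 * m)) :
  ((std_opt k).1 <= m) /\ ((std_opt k).2 -> 0 < (std_opt k).1).
Proof.
rewrite /std_opt /=; split => //.
have := ltn_ord k; have := odd_double_half k; rewrite ?uphalfE; case: (odd k) => /= e; lia.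
Qed.

Lemma skey_strict m (k : 'I_m) : skey (strict_opt k) = 2 * k.+1.
Proof. by []. Qed.

Lemma strict_bounds m (k : 'I_m) :
  ((strict_opt k).1 <= m) /\ ((strict_opt k).2 -> 0 < (strict_opt k).1).
Proof. by rewrite /strict_opt /=; split => //; apply: ltn_ord. Qed.

Lemma Kz_le m k : k < 2 * m + 1 -> Kz m k <= 2 * m.
Proof. rewrite /Kz; case: (leqP m k); lia. Qed.

Lemma Kz_lazy m t : t <= 2 * m ->
  let u := (if odd t then m - (t.+1)./2 else m + t./2) in
  u < 2 * m + 1 /\ Kz m u = t.
Proof.
move=> ht /=; rewrite /Kz.
have := odd_double_half t; case: (odd t) => /= e.
- by split; [lia| case: (leqP m _); lia].
- by split; [lia| case: (leqP m _); lia].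
Qed.

Lemma x_count_lazy n m (pi : 'S_n) (hn : 0 < n) :
  #|[set c : {ffun 'I_n -> 'I_(2 * m + 1)} |
       shelf_deck m (fun i => lazy_opt (c i)) == perm_seq pi]| = Omega m pi.
Proof.
pose x0 := Ordinal hn.
rewrite /Omega.
transitivity #|[set c : {ffun 'I_n -> 'I_(2 * m + 1)} |
                 sorted (ltl (fun i => nat_of_ord (c i)) odd) (perm_seq pi)]|.
  apply: eq_card => c; rewrite !inE shelf_eq.
  - by apply: sorted_ltl_ext => i; exact: skey_lazy.
  - by move=> i; exact: (lazy_bounds _).1.
  - by move=> i; exact: (lazy_bounds _).2.
transitivity #|[set g : {ffun 'I_n -> 'I_(2 * m + 1)} |
     sorted (ltl (fun i => Kz m (g i)) odd) (perm_seq pi) && [forall i, predT (g i)]]|.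
  pose h := fun t : 'I_(2 * m + 1) =>
    insubd t (if odd t then m - (t.+1)./2 else m + t./2) : 'I_(2 * m + 1).
  pose h' := fun t : 'I_(2 * m + 1) => insubd t (Kz m t) : 'I_(2 * m + 1).
  apply: (@card_transfer n _ _ (fun k => nat_of_ord k) (fun k => Kz m k) predT
            (fun l => sorted (ltl l odd) (perm_seq pi)) _ h h').
  - by move=> l1 l2 E; apply: sorted_ltl_ext.
  - move=> t; have ht : t <= 2 * m by have := ltn_ord t; lia.
    have [lt e] := Kz_lazy ht.
    by rewrite /h val_insubd lt.
  - by [].
  - move=> t _; rewrite /h' val_insubd.
    have := Kz_le (ltn_ord t) => hk; have -> : Kz m t < 2 * m + 1 by lia.
    by [].
  - by move=> a b; apply: ord_inj.
  - by move=> a b _ _ /eqP; rewrite Kz_inj => /eqP.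
apply: eq_card => g; rewrite !inE (pp_sorted _ _ x0).
have -> : [forall i, predT (g i)] by apply/forallP.
by rewrite andbT.
Qed.

Lemma zdec_neq0 m (u : 'I_(2 * m + 1)) : (zdec u != 0)%R = (nat_of_ord u != m).
Proof. by rewrite /zdec subr_eq0 eqz_nat. Qed.

Lemma zdec_ge1 m (u : 'I_(2 * m + 1)) : (1 <= zdec u)%R = (m < u).
Proof. by rewrite /zdec lerBrDr -PoszD lez_nat add1n. Qed.

Lemma Kz_eq0 m k : (Kz m k == 0) = (k == m).
Proof. rewrite /Kz; case: (leqP m k) => h; apply/eqP/eqP; lia. Qed.

Lemma x_count_std n m (pi : 'S_n) (hn : 0 < n) (hm : 0 < m) :
  #|[set c : {ffun 'I_n -> 'I_(2 * m)} |
       shelf_deck m (fun i => std_opt (c i)) == perm_seq pi]| = Omega_star m pi.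
Proof.
pose x0 := Ordinal hn.
rewrite /Omega_star.
transitivity #|[set c : {ffun 'I_n -> 'I_(2 * m)} |
                 sorted (ltl (fun i => (nat_of_ord (c i)).+1) odd) (perm_seq pi)]|.
  apply: eq_card => c; rewrite !inE shelf_eq.
  - by apply: sorted_ltl_ext => i; exact: skey_std.
  - by move=> i; exact: (std_bounds _).1.
  - by move=> i; exact: (std_bounds _).2.
transitivity #|[set g : {ffun 'I_n -> 'I_(2 * m + 1)} |
     sorted (ltl (fun i => Kz m (g i)) odd) (perm_seq pi) &&
     [forall i, (fun t : 'I_(2 * m + 1) => nat_of_ord t != m) (g i)]]|.
  have d1 : 0 < 2 * m + 1 by lia.
  have d2 : 0 < 2 * m by lia.
  pose h := fun t : 'I_(2 * m) =>
    insubd (Ordinal d1) (if odd t.+1 then m - (t.+2)./2 else m + (t.+1)./2) : 'I_(2 * m + 1).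
  pose h' := fun t : 'I_(2 * m + 1) => insubd (Ordinal d2) (Kz m t - 1) : 'I_(2 * m).
  apply: (@card_transfer n _ _ (fun k => (nat_of_ord k).+1) (fun k => Kz m k)
            (fun t : 'I_(2 * m + 1) => nat_of_ord t != m)
            (fun l => sorted (ltl l odd) (perm_seq pi)) _ h h').
  - by move=> l1 l2 E; apply: sorted_ltl_ext.
  - move=> t; have ht : t.+1 <= 2 * m by have := ltn_ord t; lia.
    have [lt e] := Kz_lazy ht.
    by rewrite /h val_insubd lt.
  - move=> t; have ht : t.+1 <= 2 * m by have := ltn_ord t; lia.
    have [lt e] := Kz_lazy ht.
    rewrite /h val_insubd lt -Kz_eq0 e; done.
  - move=> t /= tm; rewrite /h' val_insubd.
    have := Kz_le (ltn_ord t) => hk.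
    have : Kz m t != 0 by rewrite Kz_eq0.
    move=> /eqP hk0; have -> : Kz m t - 1 < 2 * m by lia.
    lia.
  - by move=> a b [] /ord_inj.
  - by move=> a b _ _ /eqP; rewrite Kz_inj => /eqP.
apply: eq_card => g; rewrite !inE (pp_sorted _ _ x0); congr (_ && _).
by apply: eq_forallb => i; rewrite zdec_neq0.
Qed.

Lemma x_count_strict n m (pi : 'S_n) (hn : 0 < n) (hm : 0 < m) :
  #|[set c : {ffun 'I_n -> 'I_m} |
       shelf_deck m (fun i => strict_opt (c i)) == perm_seq pi]| = Omega_plus m pi.
Proof.
pose x0 := Ordinal hn.
rewrite /Omega_plus.
transitivity #|[set c : {ffun 'I_n -> 'I_m} |
                 sorted (ltl (fun i => 2 * (nat_of_ord (c i)).+1) odd) (perm_seq pi)]|.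
  apply: eq_card => c; rewrite !inE shelf_eq.
  - by apply: sorted_ltl_ext => i; exact: skey_strict.
  - by move=> i; exact: (strict_bounds _).1.
  - by move=> i; exact: (strict_bounds _).2.
transitivity #|[set g : {ffun 'I_n -> 'I_(2 * m + 1)} |
     sorted (ltl (fun i => Kz m (g i)) odd) (perm_seq pi) &&
     [forall i, (fun t : 'I_(2 * m + 1) => m < t) (g i)]]|.
  have d1 : 0 < 2 * m + 1 by lia.
  pose h := fun t : 'I_m => insubd (Ordinal d1) (m + t.+1) : 'I_(2 * m + 1).
  pose h' := fun t : 'I_(2 * m + 1) => insubd (Ordinal hm) (t - m - 1) : 'I_m.
  apply: (@card_transfer n _ _ (fun k => 2 * (nat_of_ord k).+1) (fun k => Kz m k)
            (fun t : 'I_(2 * m + 1) => m < t)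
            (fun l => sorted (ltl l odd) (perm_seq pi)) _ h h').
  - by move=> l1 l2 E; apply: sorted_ltl_ext.
  - move=> t; have ht := ltn_ord t.
    rewrite /h val_insubd; have -> : m + t.+1 < 2 * m + 1 by lia.
    rewrite /Kz; case: leqP; lia.
  - move=> t; have ht := ltn_ord t.
    rewrite /h val_insubd /=; have -> : m + t.+1 < 2 * m + 1 by lia.
    lia.
  - move=> t /= tm; rewrite /h' val_insubd.
    have ht := ltn_ord t.
    have -> : t - m - 1 < m by lia.
    rewrite /Kz; case: leqP; lia.
  - by move=> a b /eqP; rewrite eqn_mul2l /= => /eqP [] /ord_inj.
  - by move=> a b _ _ /eqP; rewrite Kz_inj => /eqP.
apply: eq_card => g; rewrite !inE (pp_sorted _ _ x0); congr (_ && _).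
by apply: eq_forallb => i; rewrite zdec_ge1.
Qed.

Lemma card_or n (P Q : pred 'I_n) : (forall j, P j -> ~~ Q j) ->
  #|[set j | P j || Q j]| = #|[set j | P j]| + #|[set j | Q j]|.
Proof.
move=> PQ; rewrite -cardsUI.
have -> : [set j | P j] :&: [set j | Q j] = set0.
  by apply/setP => j; rewrite !inE; case Pj: (P j) => //=; rewrite (negbTE (PQ j Pj)).
rewrite cards0 addn0; apply: eq_card => j; by rewrite !inE.
Qed.

Lemma card_split3 n (P : pred 'I_n) (i : 'I_n) : P i ->
  #|[set j | P j]| = #|[set j | P j && (j < i)]| + #|[set j | P j && (i < j)]| + 1.
Proof.
move=> Pi.
have -> : [set j | P j] = i |: [set j | (P j && (j < i)) || (P j && (i < j))].
  apply/setP => j; rewrite !inE; case: (eqVneq j i) => [->|ne] /=; first by rewrite Pi.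
  by case: (P j) => //=; rewrite -neq_ltn; symmetry; exact: ne.
rewrite cardsU1 !inE ltnn !andbF /= card_or; first by rewrite addnC.
by move=> j /andP[_ h]; apply/negP => /andP[_ h']; lia.
Qed.

Lemma card_lt_sum n r (w : 'I_n -> 'I_r) (l : nat) :
  #|[set x | w x < l]| = \sum_(j < r | j < l) #|[set x | w x == j]|.
Proof.
rewrite -sum1dep_card (partition_big w (fun j : 'I_r => j < l)) //.
apply: eq_bigr => j jl; rewrite -sum1dep_card; apply: eq_bigl => x.
by case: eqP => [->|]; rewrite ?jl ?andbF ?andbT.
Qed.

Definition cntA n r (w : {ffun 'I_n -> 'I_r}) : {ffun 'I_r -> 'I_n.+1} :=
  [ffun l => inord #|[set i | w i == l]|].

Lemma cntAE n r (w : {ffun 'I_n -> 'I_r}) l : val (cntA w l) = #|[set i | w i == l]|.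
Proof.
rewrite ffunE /= inordK // ltnS.
by apply: leq_trans (max_card _) _; rewrite card_ord.
Qed.

Lemma cntA_sum n r (w : {ffun 'I_n -> 'I_r}) : \sum_(k < r) val (cntA w k) = n.
Proof.
under eq_bigr => k _ do rewrite cntAE.
transitivity (\sum_(j < r | j < r) #|[set x | w x == j]|).
  by apply: eq_bigl => j; rewrite ltn_ord.
rewrite -card_lt_sum.
have -> : [set x | w x < r] = setT by apply/setP => x; rewrite !inE ltn_ord.
by rewrite cardsT card_ord.
Qed.

Lemma interleavingE n r (A : {ffun 'I_r -> 'I_n.+1}) (w : {ffun 'I_n -> 'I_r}) :
  is_interleaving A w = (cntA w == A).
Proof.
apply/forallP/eqP => [H|<- l].
- apply/ffunP => l; apply: ord_inj; rewrite cntAE; exact/eqP.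
- by rewrite cntAE.
Qed.

Lemma riffle_entry n r rv (w : {ffun 'I_n -> 'I_r}) (i : 'I_n) :
  nth 0%N (riffle_pile (cntA w) rv (w i))
      #|[set j : 'I_n | (val j < val i)%N && (w j == w i)]| =
  #|[set j | ltl (fun k => nat_of_ord (w k)) rv j i]|.
Proof.
set l := w i.
have ek : #|[set j : 'I_n | (val j < val i)%N && (w j == l)]| =
          #|[set j | (w j == l) && (j < i)]|.
  by apply: eq_card => j; rewrite !inE andbC.
rewrite ek.
have sp : #|[set j | w j == l]| =
     #|[set j | (w j == l) && (j < i)]| + #|[set j | (w j == l) && (i < j)]| + 1.
  exact: (@card_split3 n (fun j => w j == l) i (eqxx l)).
have s0 : \sum_(j < r | (val j < val l)%N) val (cntA w j) = #|[set x | w x < l]|.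
  by rewrite card_lt_sum; apply: eq_bigr => j _; rewrite cntAE.
have rk : [set j | ltl (fun k => nat_of_ord (w k)) rv j i] =
          [set j | (w j < l) || ((w j == l) && (if rv l then i < j else j < i))].
  apply/setP => j; rewrite !inE /ltl.
  have -> : (nat_of_ord (w j) == nat_of_ord (w i)) = (w j == l) by [].
  by case: eqP => [->|].
rewrite rk card_or; last first.
  by move=> j h; rewrite -val_eqE (ltn_eqF h).
rewrite /riffle_pile /= s0 cntAE.
move: sp; set a := #|[set j | (w j == l) && (j < i)]|.
set b := #|[set j | (w j == l) && (i < j)]|.
set c := #|[set j | w j == l]|.
set s := #|[set x | w x < l]|.
move=> sp.
case: (rv l).
- rewrite nth_rev size_iota; last by lia.
  rewrite nth_iota; last by lia.
  transitivity (s + b); first by lia.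
  by congr (_ + _); apply: eq_card => j; rewrite !inE.
- rewrite /= nth_iota; last by lia.
  by congr (_ + _); apply: eq_card => j; rewrite !inE.
Qed.

Lemma perm_seq_uniq n (pi : 'S_n) : uniq (perm_seq pi).
Proof. by rewrite /perm_seq map_inj_uniq ?enum_uniq //; exact: perm_inj. Qed.

Lemma riffle_deck_eq n r rv (w : {ffun 'I_n -> 'I_r}) (pi : 'S_n) (x0 : 'I_n) :
  (riffle_deck (cntA w) rv w == map val (perm_seq pi)) =
  sorted (ltl (fun k => nat_of_ord (w k)) rv) (perm_seq pi^-1).
Proof.
have idx : forall x, index x (perm_seq pi^-1) = pi x.
  move=> x; rewrite /perm_seq -{1}(permK pi x) index_map ?index_enum_ord //.
  exact: perm_inj.
have Emap : map val (perm_seq pi) = map (fun i => val (pi i)) (enum 'I_n).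
  by rewrite /perm_seq -map_comp.
have SR := @sorted_rank n x0 (ltl (fun k => nat_of_ord (w k)) rv) (perm_seq pi^-1)
  (@ltl_irr _ _ _) (@ltl_trans _ _ _) (@ltl_total _ _ _) (perm_seq_uniq _) (@perm_seq_mem _ _).
rewrite /riffle_deck Emap; apply/eqP/idP.
- move/eq_in_map => H; apply/SR => x; rewrite idx.
  by have := H x (mem_enum _ x); rewrite /= riffle_entry => ->.
- move=> S; apply/eq_in_map => i _; rewrite /= riffle_entry.
  by have := (SR.1 S) i; rewrite idx => ->.
Qed.

Lemma multinom_neq0 n r (A : {ffun 'I_r -> 'I_n.+1}) : multinom A != 0%R.
Proof.
rewrite /multinom mulf_neq0 //.
- by rewrite pnatr_eq0 -lt0n fact_gt0.
- rewrite invr_eq0; apply/prodf_neq0 => k _.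
  by rewrite pnatr_eq0 -lt0n fact_gt0.
Qed.

Lemma riffle_prob_eq n r rv (pi : 'S_n) :
  riffle_prob r rv pi =
  ((#|[set w : {ffun 'I_n -> 'I_r} |
       riffle_deck (cntA w) rv w == map val (perm_seq pi)]|)%:R / ((r ^ n)%N)%:R)%R.
Proof.
rewrite /riffle_prob.
under eq_bigr => A _ do rewrite mulrC mulrA divfK ?multinom_neq0 //.
rewrite -mulr_suml -natr_sum; congr (_%:R / _)%R.
symmetry; rewrite -sum1dep_card.
rewrite (partition_big (fun w => cntA w) (fun A => (\sum_(k < r) val (A k)) == n)); last first.
  by move=> w _; rewrite cntA_sum.
apply: eq_bigr => A _; rewrite -sum1dep_card; apply: eq_bigl => w.
rewrite interleavingE; case: (eqVneq (cntA w) A) => [<-|_]; by rewrite ?andbT ?andbF.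
Qed.

Lemma sorted_rel_eq n (r1 r2 : rel 'I_n) s : r1 =2 r2 -> sorted r1 s = sorted r2 s.
Proof. by move=> E; case: s => //= x s; apply: eq_path. Qed.

Local Open Scope ring_scope.

Theorem proposition3p6 (n m : nat) (hn : (0 < n)%N) (hm : (0 < m)%N) (pi : 'S_n) :
  (x_lazy m pi = (Omega m pi)%:R / ((2 * m + 1) ^ n)%N%:R /\
   x_std m pi = (Omega_star m pi)%:R / ((2 * m) ^ n)%N%:R /\
   x_strict m pi = (Omega_plus m pi)%:R / (m ^ n)%N%:R) /\
  (y_lazy m pi = x_lazy m (pi^-1)%g /\
   y_star m pi = x_std m (pi^-1)%g /\
   y_plus m pi = x_strict m (pi^-1)%g).
Proof.
pose x0 : 'I_n := Ordinal hn.
split; [split; [|split]|split; [|split]].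
- by rewrite /x_lazy (@x_count_lazy n m pi hn).
- by rewrite /x_std (@x_count_std n m pi hn hm).
- by rewrite /x_strict (@x_count_strict n m pi hn hm).
- rewrite /y_lazy riffle_prob_eq /x_lazy; congr (_%:R / _).
  apply: eq_card => c; rewrite !inE (riffle_deck_eq _ _ _ x0) shelf_eq.
  + by apply: sorted_ltl_ext => i; rewrite skey_lazy.
  + by move=> i; exact: (lazy_bounds _).1.
  + by move=> i; exact: (lazy_bounds _).2.
- rewrite /y_star riffle_prob_eq /x_std; congr (_%:R / _).
  apply: eq_card => c; rewrite !inE (riffle_deck_eq _ _ _ x0) shelf_eq.
  + by apply: sorted_rel_eq => a b; rewrite /ltl !skey_std ltnS eqSS.
  + by move=> i; exact: (std_bounds _).1.
  + by move=> i; exact: (std_bounds _).2.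
- rewrite /y_plus riffle_prob_eq /x_strict; congr (_%:R / _).
  apply: eq_card => c; rewrite !inE (riffle_deck_eq _ _ _ x0) shelf_eq.
  + apply: sorted_rel_eq => a b; rewrite /ltl !skey_strict oddM ltn_mul2l eqn_mul2l.
    by rewrite /= ltnS eqSS.
  + by move=> i; exact: (strict_bounds _).1.
  + by move=> i; exact: (strict_bounds _).2.
Qed.
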